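(* The abelian group $D_2(H)$ is isomorphic to the abelian group $G$ given by the following presentation. Generators: symbols $t(a,b;c,d)$ for $a,b,c,d\in H$ and symbols $s(a,b)$ for $a,b\in H$. Relations, for all $a,b,c,d,e\in H$: (1) $t$ is multilinear in its four arguments; (2) (AS) $t(a,b;c,d)=-t(b,a;c,d)=-t(a,b;d,c)$ and $t(a,b;c,d)=t(c,d;a,b)$; (3) (IHX) $t(a,b;c,d)=t(a,d;c,b)+t(a,c;b,d)$; (4) $s(a,a)=0$ and $s(a,b)=s(b,a)$; (5) $2\,s(a,b)=t(a,b;a,b)$; (6) $s(a+b,c)=s(a,c)+s(b,c)+t(a,c;b,c)$. An isomorphism $G\to D_2(H)$ is given by $t(a,b;c,d)\mapsto T(a,b;c,d)$ and $s(a,b)\mapsto a\odot b$.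
   Context: Let $g\ge1$ and let $\Sigma_{g,1}$ be a compact connected oriented surface of genus $g$ with one boundary component. Let $H=H_1(\Sigma_{g,1};\mathbb Z)\cong\mathbb Z^{2g}$ with intersection form $\omega:H\times H\to\mathbb Z$. $\mathcal L(H)=\bigoplus_{k\ge1}\mathcal L_k(H)$ is the free Lie ring on $H$, embedded in the tensor algebra $T(H)$ via $[x,y]=x\otimes y-y\otimes x$. Put $D_k(H):=\ker\big(H\otimes\mathcal L_{k+1}(H)\to\mathcal L_{k+2}(H),\ h\otimes u\mapsto[h,u]\big)$. For $a,b,c,d\in H$ put $T(a,b;c,d):=a\otimes[b,[c,d]]+b\otimes[[c,d],a]+c\otimes[d,[a,b]]+d\otimes[[a,b],c]$ and $a\odot b:=a\otimes[b,[a,b]]+b\otimes[[a,b],a]$; these are elements of $D_2(H)$ ($T(a,b;c,d)$ is the expansion of the uni-trivalent tree with two trivalent vertices, leaves $a,b$ attached to one vertex and $c,d$ to the other, and $a\odot b=\tfrac12 T(a,b;a,b)$). *)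

(* Defs.v *)
From HB Require Import structures.
From mathcomp Require Import all_boot all_algebra.

Set Implicit Arguments.
Unset Strict Implicit.
Unset Printing Implicit Defensive.

Import GRing.Theory.
Local Open Scope ring_scope.

(* H = H_1(Sigma_{g,1}; Z) = Z^n with n = 2g, realised as integer row vectors.
   The degree-k part T_k(H) = H^{(x)k} of the tensor algebra is realised as
   integer-valued functions on words (k-tuples) in the standard basis of H. *)

Section Tensors.
Variable n : nat.

Definition H := 'rV[int]_n.
Definition Tk (k : nat) := {ffun k.-tuple 'I_n -> int}.

Definition emb (a : H) : Tk 1 := [ffun w => a 0 (tnth w ord0)].

Definition tmul p q (x : Tk p) (y : Tk q) : Tk (p + q) :=
  [ffun w => x [tuple tnth w (lshift q i) | i < p]
           * y [tuple tnth w (rshift p i) | i < q]].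

Definition tcastT p q (e : p = q) (x : Tk p) : Tk q :=
  [ffun w => x (tcast (esym e) w)].

Definition br p q (x : Tk p) (y : Tk q) : Tk (p + q) :=
  tmul x y - tcastT (addnC q p) (tmul y x).

(* L_k(H): the degree-k part of the free Lie ring on H inside T(H),
   i.e. the additive subgroups generated by H and closed under brackets *)
Inductive lie : forall k, Tk k -> Prop :=
  | lie_gen (a : H) : lie (emb a)
  | lie_br p q (x : Tk p) (y : Tk q) : lie x -> lie y -> lie (br x y)
  | lie_0 k : lie (0 : Tk k)
  | lie_add k (x y : Tk k) : lie x -> lie y -> lie (x + y)
  | lie_opp k (x : Tk k) : lie x -> lie (- x).

(* H (x) L_k(H), viewed inside T_1 (x) T_k = T_(1+k) *)
Inductive HL k : Tk (1 + k) -> Prop :=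
  | HL_gen (a : H) (u : Tk k) : lie u -> HL (tmul (emb a) u)
  | HL_0 : HL 0
  | HL_add x y : HL x -> HL y -> HL (x + y)
  | HL_opp x : HL x -> HL (- x).

(* the bracket map T_1 (x) T_k -> T_(1+k), h (x) u |-> [h,u] = h u - u h,
   written on basis words: (h (x) u) rotated gives u (x) h *)
Definition rotidx k (i : 'I_k.+1) : 'I_k.+1 := inord ((i + k) %% k.+1).
Definition bmap k (x : Tk k.+1) : Tk k.+1 :=
  [ffun w => x w - x [tuple tnth w (rotidx i) | i < k.+1]].

(* D_k(H) = ker (H (x) L_(k+1) -> L_(k+2)) *)
Definition Dk k (x : Tk k.+2) : Prop := HL (k := k.+1) x /\ bmap x = 0.

Definition Tel (a b c d : H) : Tk 4 :=
  (tmul (emb a) (br (emb b) (br (emb c) (emb d))) : Tk 4)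
  + (tmul (emb b) (br (br (emb c) (emb d)) (emb a)) : Tk 4)
  + (tmul (emb c) (br (emb d) (br (emb a) (emb b))) : Tk 4)
  + (tmul (emb d) (br (br (emb a) (emb b)) (emb c)) : Tk 4).

Definition odot (a b : H) : Tk 4 :=
  (tmul (emb a) (br (emb b) (br (emb a) (emb b))) : Tk 4)
  + (tmul (emb b) (br (br (emb a) (emb b)) (emb a)) : Tk 4).

(* The presented group G: free abelian group on symbols t(a,b;c,d), s(a,b),
   modulo relations (1)-(6).  Elements of the free abelian group are
   represented by formal sums (lists of (coefficient, symbol)); two formal sums
   represent the same element iff their coefficient functions agree. *)
Definition Sym := ((H * H * H * H) + (H * H))%type.
Definition fsum := seq (int * Sym).

Definition coef (f : fsum) (s : Sym) : int := \sum_(p <- f | p.2 == s) p.1.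

Definition tsym (a b c d : H) : fsum := [:: (1, inl (a, b, c, d))].
Definition ssym (a b : H) : fsum := [:: (1, inr (a, b))].
Definition fneg (f : fsum) : fsum := [seq (- p.1, p.2) | p <- f].

(* the defining relators (each relation written as "lhs - rhs") *)
Inductive relator : fsum -> Prop :=
  | rel_lin1 a a' b c d :
      relator (tsym (a + a') b c d ++ fneg (tsym a b c d) ++ fneg (tsym a' b c d))
  | rel_lin2 a b b' c d :
      relator (tsym a (b + b') c d ++ fneg (tsym a b c d) ++ fneg (tsym a b' c d))
  | rel_lin3 a b c c' d :
      relator (tsym a b (c + c') d ++ fneg (tsym a b c d) ++ fneg (tsym a b c' d))
  | rel_lin4 a b c d d' :
      relator (tsym a b c (d + d') ++ fneg (tsym a b c d) ++ fneg (tsym a b c d'))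
  | rel_as1 a b c d : relator (tsym a b c d ++ tsym b a c d)
  | rel_as2 a b c d : relator (tsym a b c d ++ tsym a b d c)
  | rel_as3 a b c d : relator (tsym a b c d ++ fneg (tsym c d a b))
  | rel_ihx a b c d :
      relator (tsym a b c d ++ fneg (tsym a d c b) ++ fneg (tsym a c b d))
  | rel_s0 a : relator (ssym a a)
  | rel_ssym a b : relator (ssym a b ++ fneg (ssym b a))
  | rel_s2 a b : relator ((2, inr (a, b)) :: fneg (tsym a b a b))
  | rel_sadd a b c :
      relator (ssym (a + b) c ++ fneg (ssym a c) ++ fneg (ssym b c)
             ++ fneg (tsym a c b c)).

Definition inR (f : fsum) : Prop :=
  exists rs : seq (int * fsum),
    (forall r, r \in rs -> relator r.2) /\
    (forall s, coef f s = \sum_(r <- rs) r.1 * coef r.2 s).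

Definition gen (s : Sym) : Tk 4 :=
  match s with
  | inl (a, b, c, d) => Tel a b c d
  | inr (a, b) => odot a b
  end.

Definition Phi (f : fsum) : Tk 4 := \sum_(p <- f) (gen p.2) *~ p.1.

End Tensors.

(* Main.v *)
Require Import Defs.
From HB Require Import structures.
From mathcomp Require Import all_boot all_algebra ring zify.
Import GRing.Theory.
Local Open Scope ring_scope.
Set Implicit Arguments.
Unset Strict Implicit.


Section Eval.
Variable n : nat.
Implicit Types (a b c d : H n) (i j k l : 'I_n).

Lemma emb1 a i : emb a [tuple i] = a 0 i.
Proof. by rewrite ffunE. Qed.

Lemma tmul13 (x : Tk n 1) (y : Tk n 3) i j k l :
  tmul x y [tuple i; j; k; l] = x [tuple i] * y [tuple j; k; l].
Proof.
rewrite ffunE; congr (x _ * y _); apply: eq_from_tnth => m; rewrite tnth_mktuple.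
  by case: m => [[|//] ?].
by case: m => [[|[|[|//]]] ?].
Qed.

Lemma br11 (x y : Tk n 1) i j :
  br x y [tuple i; j] = x [tuple i] * y [tuple j] - y [tuple i] * x [tuple j].
Proof.
rewrite !ffunE; congr (x _ * y _ - y _ * x _); apply: eq_from_tnth => m;
  rewrite tnth_mktuple ?tcastE; by case: m => [[|[|//]] ?].
Qed.

Lemma br12 (x : Tk n 1) (y : Tk n 2) i j k :
  br x y [tuple i; j; k] = x [tuple i] * y [tuple j; k] - y [tuple i; j] * x [tuple k].
Proof.
rewrite !ffunE; congr (x _ * y _ - y _ * x _); apply: eq_from_tnth => m;
  rewrite tnth_mktuple ?tcastE; by case: m => [[|[|[|//]]] ?].
Qed.

Lemma br21 (x : Tk n 2) (y : Tk n 1) i j k :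
  br x y [tuple i; j; k] = x [tuple i; j] * y [tuple k] - y [tuple i] * x [tuple j; k].
Proof.
rewrite !ffunE; congr (x _ * y _ - y _ * x _); apply: eq_from_tnth => m;
  rewrite tnth_mktuple ?tcastE; by case: m => [[|[|[|//]]] ?].
Qed.

Lemma addfE m (f g : Tk n m) w : (f + g) w = f w + g w.
Proof. by rewrite ffunE. Qed.
Lemma oppfE m (f : Tk n m) w : (- f) w = - f w.
Proof. by rewrite ffunE. Qed.

Definition TelF (A B C D : nat -> int) : int :=
  A 0%N * (B 1%N * (C 2%N * D 3%N - D 2%N * C 3%N) - (C 1%N * D 2%N - D 1%N * C 2%N) * B 3%N)
  + B 0%N * ((C 1%N * D 2%N - D 1%N * C 2%N) * A 3%N - A 1%N * (C 2%N * D 3%N - D 2%N * C 3%N))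
  + C 0%N * (D 1%N * (A 2%N * B 3%N - B 2%N * A 3%N) - (A 1%N * B 2%N - B 1%N * A 2%N) * D 3%N)
  + D 0%N * ((A 1%N * B 2%N - B 1%N * A 2%N) * C 3%N - C 1%N * (A 2%N * B 3%N - B 2%N * A 3%N)).

Definition wv (a : H n) (i j k l : 'I_n) (m : nat) : int :=
  match m with 0 => a 0 i | 1 => a 0 j | 2 => a 0 k | _ => a 0 l end.

Lemma TelE a b c d i j k l :
  Tel a b c d [tuple i; j; k; l] =
  TelF (wv a i j k l) (wv b i j k l) (wv c i j k l) (wv d i j k l).
Proof.
rewrite /Tel !addfE !tmul13 !br12 !br21 !br11 !emb1 /TelF /=.
done.
Qed.

Definition OdF (A B : nat -> int) : int :=
  A 0%N * (B 1%N * (A 2%N * B 3%N - B 2%N * A 3%N) - (A 1%N * B 2%N - B 1%N * A 2%N) * B 3%N)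
  + B 0%N * ((A 1%N * B 2%N - B 1%N * A 2%N) * A 3%N - A 1%N * (A 2%N * B 3%N - B 2%N * A 3%N)).

Lemma odotE a b i j k l :
  odot a b [tuple i; j; k; l] = OdF (wv a i j k l) (wv b i j k l).
Proof. by rewrite /odot !addfE !tmul13 !br12 !br21 !br11 !emb1. Qed.

Lemma tk4_ext (x y : Tk n 4) :
  (forall i j k l, x [tuple i; j; k; l] = y [tuple i; j; k; l]) -> x = y.
Proof.
move=> E; apply/ffunP => -[[|i [|j [|k [|l [|]]]]] Hs] //.
have -> : Tuple Hs = [tuple i; j; k; l] by exact: val_inj.
exact: E.
Qed.

Lemma Phi_cat (f g : fsum n) : Phi (f ++ g) = Phi f + Phi g.
Proof. by rewrite /Phi big_cat. Qed.
Lemma Phi_neg (f : fsum n) : Phi (fneg f) = - Phi f.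
Proof.
rewrite /Phi /fneg big_map -sumrN; apply: eq_bigr => p _; by rewrite mulrNz.
Qed.
Lemma Phi_cons (p : int * Sym n) (f : fsum n) : Phi (p :: f) = gen p.2 *~ p.1 + Phi f.
Proof. by rewrite /Phi big_cons. Qed.
Lemma Phi_nil : Phi (@nil (int * Sym n)) = 0.
Proof. by rewrite /Phi big_nil. Qed.
Lemma Phi_tsym a b c d : Phi (tsym a b c d) = Tel a b c d.
Proof. by rewrite /tsym Phi_cons Phi_nil addr0. Qed.
Lemma Phi_ssym a b : Phi (ssym a b) = odot a b.
Proof. by rewrite /ssym Phi_cons Phi_nil addr0. Qed.

Definition TelL := locked (@Tel n).
Lemma TelLE : @Tel n = TelL. Proof. by rewrite /TelL -lock. Qed.
Lemma TelLw a b c d i j k l : TelL a b c d [tuple i; j; k; l] =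
  TelF (wv a i j k l) (wv b i j k l) (wv c i j k l) (wv d i j k l).
Proof. by rewrite -TelLE TelE. Qed.

Definition OdL := locked (@odot n).
Lemma OdLE : @odot n = OdL. Proof. by rewrite /OdL -lock. Qed.
Lemma OdLw a b i j k l : OdL a b [tuple i; j; k; l] = OdF (wv a i j k l) (wv b i j k l).
Proof. by rewrite -OdLE odotE. Qed.

Lemma Phi_rel (r : fsum n) : relator r -> Phi r = 0.
Proof.
case=> *; rewrite ?Phi_cat ?Phi_neg ?Phi_tsym ?Phi_ssym ?Phi_cons ?Phi_nil /= ?TelLE ?OdLE;
apply: tk4_ext => i j k l; rewrite ?addfE ?oppfE ?ffunMzE ?TelLw ?OdLw ?ffunE
  /TelF /OdF /wv /= ?mxE ?mulrzz; ring.
Qed.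

Definition LieQ (m : nat) : Tk n m -> Prop :=
  match m with
  | 0 => fun x => x = 0
  | 2 => fun x => forall i j, x [tuple i; j] = - x [tuple j; i]
  | 3 => fun x => forall i j l, x [tuple i; j; l] + x [tuple j; i; l] + x [tuple j; l; i] = 0
  | _ => fun _ => True
  end.

Lemma LieQ0 m : LieQ (0 : Tk n m).
Proof.
destruct m as [|[|[|[|m]]]]; rewrite /= //; intros; by rewrite !ffunE ?oppr0 ?addr0.
Qed.

Lemma LieQD m (x y : Tk n m) : LieQ x -> LieQ y -> LieQ (x + y).
Proof.
destruct m as [|[|[|[|m]]]]; rewrite /= //.
- by move=> -> ->; rewrite addr0.
- by move=> Hx Hy i j; rewrite !addfE Hx Hy opprD.
- move=> Hx Hy i j l; rewrite !addfE.
  by have := congr2 +%R (Hx i j l) (Hy i j l); rewrite addr0 => <-; ring.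
Qed.
Lemma LieQN m (x : Tk n m) : LieQ x -> LieQ (- x).
Proof.
destruct m as [|[|[|[|m]]]]; rewrite /= //.
- by move=> ->; rewrite oppr0.
- by move=> Hx i j; rewrite !oppfE Hx.
- by move=> Hx i j l; rewrite !oppfE -!opprD Hx oppr0.
Qed.

Lemma br0l p q (y : Tk n q) : br (0 : Tk n p) y = 0.
Proof. by apply/ffunP => w; rewrite !ffunE mul0r mulr0 subr0. Qed.
Lemma br0r p q (x : Tk n p) : br x (0 : Tk n q) = 0.
Proof. by apply/ffunP => w; rewrite !ffunE mul0r mulr0 subr0. Qed.

Lemma LieQ_big m (x : Tk n m) : (3 < m)%N -> LieQ x.
Proof. by destruct m as [|[|[|[|m]]]]. Qed.

Lemma lieQ m (x : Tk n m) : lie x -> LieQ x.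
Proof.
elim=> {m x} //.
- move=> p q x y _ Hx _ Hy.
  case: (ltnP 3 (p + q)) => big; first exact: LieQ_big.
  case: p x Hx big => [|p] x Hx big.
    by rewrite /= in Hx; rewrite Hx br0l; apply: LieQ0.
  case: q y Hy big => [|q] y Hy big.
    by rewrite /= in Hy; rewrite Hy br0r; apply: LieQ0.
  case: p x Hx big => [|[|[|p]]] x Hx big; case: q y Hy big => [|[|[|q]]] y Hy big //=.
  all: try by move=> i j; rewrite !br11; ring.
  all: try by move=> i j l; rewrite !br12 (Hy j i) (Hy l i); ring.
  all: try by move=> i j l; rewrite !br21 (Hx j i) (Hx l i); ring.
- by move=> ?; apply: LieQ0.
- by move=> m x y _ Hx _ Hy; apply: LieQD.
- by move=> m x _ Hx; apply: LieQN.
Qed.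

Definition HLQ (x : Tk n 4) := forall h i j l,
  x [tuple h; i; j; l] + x [tuple h; j; i; l] + x [tuple h; j; l; i] = 0.

Lemma hlQ (x : Tk n 4) : HL (k := 3) x -> HLQ x.
Proof.
elim=> {x}.
- move=> a u Hu h i j l; rewrite !tmul13 -!mulrDr.
  by have /= -> := lieQ Hu; rewrite mulr0.
- by move=> h i j l; rewrite !ffunE !addr0.
- move=> x y _ Hx _ Hy h i j l; rewrite !addfE.
  by have := congr2 +%R (Hx h i j l) (Hy h i j l); rewrite addr0 => <-; ring.
- by move=> x _ Hx h i j l; rewrite !oppfE -!opprD Hx oppr0.
Qed.

Lemma bmapE (x : Tk n 4) i j k l :
  bmap (k := 3) x [tuple i; j; k; l] = x [tuple i; j; k; l] - x [tuple l; i; j; k].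
Proof.
rewrite ffunE; congr (_ - x _); apply: eq_from_tnth => m; rewrite tnth_mktuple.
case: m => [[|[|[|[|//]]]] Hm]; rewrite /tnth /rotidx /= ?inordK //.
Qed.

Definition Cyc (x : Tk n 4) := forall i j k l, x [tuple i; j; k; l] = x [tuple l; i; j; k].

Lemma bmap0_cyc (x : Tk n 4) : bmap (k := 3) x = 0 -> Cyc x.
Proof.
move=> E i j k l; have := congr1 (fun f : Tk n 4 => f [tuple i; j; k; l]) E.
by rewrite /= bmapE ffunE => /eqP; rewrite subr_eq0 => /eqP.
Qed.

Lemma cyc_bmap0 (x : Tk n 4) : Cyc x -> bmap (k := 3) x = 0.
Proof. by move=> C; apply: tk4_ext => i j k l; rewrite bmapE ffunE C subrr. Qed.

Lemma Tel_cyc a b c d : Cyc (Tel a b c d).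
Proof. by move=> i j k l; rewrite TelLE !TelLw /TelF /wv /=; ring. Qed.
Lemma odot_cyc a b : Cyc (odot a b).
Proof. by move=> i j k l; rewrite OdLE !OdLw /OdF /wv /=; ring. Qed.
Lemma Tel_hlq a b c d : HLQ (Tel a b c d).
Proof. by move=> h i j l; rewrite TelLE !TelLw /TelF /wv /=; ring. Qed.
Lemma odot_hlq a b : HLQ (odot a b).
Proof. by move=> h i j l; rewrite OdLE !OdLw /OdF /wv /=; ring. Qed.

Lemma Tel_HL a b c d : HL (k := 3) (Tel a b c d).
Proof.
exact (HL_add (HL_add (HL_add
  (HL_gen a (lie_br (lie_gen b) (lie_br (lie_gen c) (lie_gen d))))
  (HL_gen b (lie_br (lie_br (lie_gen c) (lie_gen d)) (lie_gen a))))
  (HL_gen c (lie_br (lie_gen d) (lie_br (lie_gen a) (lie_gen b)))))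
  (HL_gen d (lie_br (lie_br (lie_gen a) (lie_gen b)) (lie_gen c)))).
Qed.
Lemma odot_HL a b : HL (k := 3) (odot a b).
Proof.
exact (HL_add
  (HL_gen a (lie_br (lie_gen b) (lie_br (lie_gen a) (lie_gen b))))
  (HL_gen b (lie_br (lie_br (lie_gen a) (lie_gen b)) (lie_gen a)))).
Qed.

Lemma Phi_ind (P : Tk n 4 -> Prop) : P 0 -> (forall x y, P x -> P y -> P (x + y)) ->
  (forall x (k : int), P x -> P (x *~ k)) -> (forall s, P (gen s)) -> forall f, P (Phi f).
Proof.
move=> P0 PD PZ Pg; elim=> [|p f IH]; first by rewrite Phi_nil.
by rewrite Phi_cons; apply: PD => //; apply: PZ.
Qed.

Lemma mulrz_ind (P : Tk n 4 -> Prop) : P 0 -> (forall x y, P x -> P y -> P (x + y)) ->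
  (forall x, P x -> P (- x)) -> forall x (k : int), P x -> P (x *~ k).
Proof.
move=> P0 PD PN x k Px.
have Hn : forall m : nat, P (x *+ m).
  by elim=> [|m IH]; rewrite ?mulr0n ?mulrS //; apply: PD.
by case: k => m; rewrite ?NegzE ?mulrNz; [apply: Hn| apply: PN; apply: Hn].
Qed.

Lemma Cyc_Phi (f : fsum n) : Cyc (Phi f).
Proof.
apply: Phi_ind.
- by move=> i j k l; rewrite !ffunE.
- by move=> x y Hx Hy i j k l; rewrite !addfE Hx Hy.
- by move=> x k Hx i j k' l; rewrite !ffunMzE Hx.
- by case=> [[[[a b] c] d]|[a b]]; [exact: Tel_cyc | exact: odot_cyc].
Qed.

Lemma HLQ_Phi (f : fsum n) : HLQ (Phi f).
Proof.
apply: Phi_ind.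
- by move=> h i j l; rewrite !ffunE !addr0.
- move=> x y Hx Hy h i j l; rewrite !addfE.
  by have := congr2 +%R (Hx h i j l) (Hy h i j l); rewrite addr0 => <-; ring.
- by move=> x k Hx h i j l; rewrite !ffunMzE -!mulrzDl Hx mul0rz.
- by case=> [[[[a b] c] d]|[a b]]; [exact: Tel_hlq | exact: odot_hlq].
Qed.

Lemma HL_Phi (f : fsum n) : HL (k := 3) (Phi f).
Proof.
apply: Phi_ind.
- exact: (@HL_0 n 3).
- by move=> x y; apply: HL_add.
- apply: mulrz_ind; [exact: (@HL_0 n 3) | by move=> x y; apply: HL_add | by move=> x; apply: HL_opp].
- by case=> [[[[a b] c] d]|[a b]]; [exact: Tel_HL | exact: odot_HL].
Qed.

Implicit Types (f g h : fsum n) (s : Sym n).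

Lemma cf_nil s : coef (@nil (int * Sym n)) s = 0.
Proof. by rewrite /coef big_nil. Qed.
Lemma cf_cons p f s : coef (p :: f) s = (if p.2 == s then p.1 else 0) + coef f s.
Proof. by rewrite /coef big_cons; case: ifP => _; rewrite ?add0r. Qed.
Lemma cf_cat f g s : coef (f ++ g) s = coef f s + coef g s.
Proof. by rewrite /coef big_cat. Qed.
Lemma cf_neg f s : coef (fneg f) s = - coef f s.
Proof. by rewrite /coef /fneg big_map -sumrN. Qed.
Definition ind := locked (fun x y : Sym n => (if x == y then 1 else 0) : int).
Lemma cf_tsym a b c d s : coef (tsym a b c d) s = ind (inl (a, b, c, d)) s.
Proof. by rewrite /tsym cf_cons cf_nil addr0 /ind -lock. Qed.
Lemma cf_ssym a b s : coef (ssym a b) s = ind (inr (a, b)) s.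
Proof. by rewrite /ssym cf_cons cf_nil addr0 /ind -lock. Qed.
Lemma cf_cons' p f s : coef (p :: f) s = p.1 * ind p.2 s + coef f s.
Proof. by rewrite cf_cons /ind -lock; case: ifP; rewrite ?mulr1 ?mulr0. Qed.

Lemma inR_ext f g : (forall s, coef f s = coef g s) -> inR f -> inR g.
Proof. by move=> E [rs [H1 H2]]; exists rs; split=> // s; rewrite -E. Qed.
Lemma inR_nil : inR (@nil (int * Sym n)).
Proof. by exists [::]; split=> // s; rewrite cf_nil big_nil. Qed.
Lemma inR_rel (r : fsum n) : relator r -> inR r.
Proof.
move=> Hr; exists [:: (1, r)]; split.
  by move=> r'; rewrite mem_seq1 => /eqP ->.
by move=> s; rewrite big_seq1 mul1r.
Qed.
Lemma inR_cat f g : inR f -> inR g -> inR (f ++ g).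
Proof.
move=> [rs [H1 H2]] [rs' [H1' H2']]; exists (rs ++ rs'); split.
  by move=> r; rewrite mem_cat => /orP[]; [apply: H1|apply: H1'].
by move=> s; rewrite cf_cat big_cat H2 H2'.
Qed.
Lemma inR_neg f : inR f -> inR (fneg f).
Proof.
move=> [rs [H1 H2]]; exists [seq (- r.1, r.2) | r <- rs]; split.
  move=> r /mapP [r' Hr' ->] /=; exact: (H1 r' Hr').
by move=> s; rewrite cf_neg H2 big_map -sumrN; apply: eq_bigr => r _; rewrite mulNr.
Qed.

Lemma Phi_coefU f (U : seq (Sym n)) : uniq U -> {subset map snd f <= U} ->
  Phi f = \sum_(s <- U) gen s *~ coef f s.
Proof.
move=> uU; elim: f => [|p f IH] sub.
  by rewrite Phi_nil big1 // => s _; rewrite cf_nil mulr0z.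
rewrite Phi_cons IH; last by move=> s Hs; apply: sub; rewrite inE Hs orbT.
have pU : p.2 \in U by apply: sub; rewrite inE eqxx.
rewrite [RHS](eq_bigr (fun s => gen s *~ (if p.2 == s then p.1 else 0) + gen s *~ coef f s)); last first.
  by move=> s _; rewrite cf_cons mulrzDr.
rewrite big_split /=; congr (_ + _).
rewrite (bigD1_seq p.2) //= eqxx big1 ?addr0 // => s /negbTE; rewrite eq_sym => ->.
by rewrite mulr0z.
Qed.

Lemma Phi_inR f : inR f -> Phi f = 0.
Proof.
move=> [rs [H1 H2]].
set U := undup (map snd f ++ flatten [seq map snd r.2 | r <- rs]).
have uU : uniq U by apply: undup_uniq.
rewrite (@Phi_coefU f U) //; last by move=> s Hs; rewrite mem_undup mem_cat Hs.
under eq_bigr => s _ do rewrite H2.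
have E : forall r, r \in rs -> Phi r.2 = \sum_(s <- U) gen s *~ coef r.2 s.
  move=> r Hr; apply: Phi_coefU => // s Hs; rewrite mem_undup mem_cat; apply/orP; right.
  by apply/flattenP; exists (map snd r.2) => //; apply/mapP; exists r.
transitivity (\sum_(r <- rs) (\sum_(s <- U) gen s *~ coef r.2 s) *~ r.1).
  transitivity (\sum_(s <- U) \sum_(r <- rs) gen s *~ (r.1 * coef r.2 s)).
    by apply: eq_bigr => s _; rewrite mulrz_sumr.
  rewrite exchange_big /=; apply: eq_bigr => r _.
  by rewrite mulrz_suml; apply: eq_bigr => s _; rewrite mulrC mulrzA.
rewrite big_seq big1 // => r Hr; by rewrite -E // Phi_rel ?mul0rz //; apply: H1.
Qed.

Definition e (i : 'I_n) : H n := delta_mx 0 i.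
Lemma eE i j : e i 0 j = (j == i)%:R.
Proof. by rewrite /e mxE eqxx. Qed.

Local Notation Idx := ('I_n * 'I_n * 'I_n * 'I_n * bool)%type.

Definition valid (x : Idx) : bool :=
  let: (a, b, c, d, t) := x in
  [|| [&& a == b, (b < c)%N, c == d & ~~ t], [&& a == b, (b < c)%N, (c < d)%N & ~~ t],
      [&& (a < b)%N, b == c, (c < d)%N & ~~ t], [&& (a < b)%N, (b < c)%N, c == d & ~~ t]
    | [&& (a < b)%N, (b < c)%N & (c < d)%N]].

Definition mkB (x : Idx) : Sym n :=
  let: (a, b, c, d, t) := x in
  if a == b then (if c == d then inr (e a, e c) else inl (e a, e c, e a, e d))
  else if b == c then inl (e b, e a, e b, e d)
  else if c == d then inl (e c, e a, e c, e b)
  else if t then inl (e a, e d, e b, e c) else inl (e a, e b, e c, e d).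

Definition L (x : Idx) (y : Tk n 4) : int :=
  let: (a, b, c, d, t) := x in
  if a == b then (if c == d then - y [tuple a; a; c; c] else - y [tuple a; a; c; d])
  else if b == c then - y [tuple b; b; a; d]
  else if c == d then - y [tuple c; c; a; b]
  else if t then - y [tuple a; b; c; d] - y [tuple a; b; d; c] else - y [tuple a; b; d; c].

Definition Ilist : seq Idx := [seq x <- enum {: Idx} | valid x].
Lemma Ilist_uniq : uniq Ilist.
Proof. by rewrite filter_uniq // enum_uniq. Qed.
Lemma mem_Ilist x : (x \in Ilist) = valid x.
Proof. by rewrite mem_filter mem_enum andbT. Qed.

Definition Nc (c : Idx -> int) : fsum n := [seq (c x, mkB x) | x <- Ilist].

Lemma cf_Nc (c : Idx -> int) s : coef (Nc c) s = \sum_(x <- Ilist | mkB x == s) c x.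
Proof. by rewrite /coef /Nc big_map. Qed.

Definition E f := exists c : Idx -> int, inR (f ++ fneg (Nc c)).

Lemma E_ext f g : (forall s, coef f s = coef g s) -> E f -> E g.
Proof.
move=> Efg [c Hc]; exists c; apply: inR_ext Hc => s.
by rewrite !cf_cat !cf_neg Efg.
Qed.
Lemma E_nil : E [::].
Proof.
exists (fun _ => 0); apply: inR_ext inR_nil => s.
by rewrite cf_cat cf_neg cf_nil cf_Nc big1 // oppr0 addr0.
Qed.
Lemma E_cat f g : E f -> E g -> E (f ++ g).
Proof.
move=> [c Hc] [c' Hc']; exists (fun x => c x + c' x).
apply: inR_ext (inR_cat Hc Hc') => s.
rewrite !cf_cat !cf_neg !cf_Nc big_split /=; ring.
Qed.
Lemma E_neg f : E f -> E (fneg f).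
Proof.
move=> [c Hc]; exists (fun x => - c x); apply: inR_ext (inR_neg Hc) => s.
rewrite !(cf_cat, cf_neg, cf_Nc) sumrN; ring.
Qed.
Lemma E_rel f g : inR (f ++ g) -> E g -> E f.
Proof.
move=> Hfg Eg; have [c Hc] := E_neg Eg.
exists c; apply: inR_ext (inR_cat Hfg Hc) => s.
rewrite !(cf_cat, cf_neg); ring.
Qed.
Lemma E_eq f g : inR (f ++ fneg g) -> E g -> E f.
Proof. by move=> H1 H2; apply: E_rel H1 (E_neg H2). Qed.

Lemma E_mkB x : valid x -> E [:: (1, mkB x)].
Proof.
move=> vx; exists (fun y => if y == x then 1 else 0).
apply: inR_ext inR_nil => s.
rewrite cf_nil cf_cat cf_neg cf_Nc cf_cons cf_nil addr0 /=.
rewrite big_mkcond /=.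
rewrite (eq_bigr (fun y => if y == x then (if mkB x == s then 1 else 0) else 0)); last first.
  move=> y _ /=; case E: (y == x); last by case: ifP.
  by move/eqP: E => ->.
rewrite (bigD1_seq x) ?Ilist_uniq ?mem_Ilist //= eqxx big1 ?addr0; last first.
  by move=> y /negbTE ->.
by case: ifP => _; rewrite ?subrr ?oppr0 ?addr0.
Qed.

End Eval.


Section B.
Variable n : nat.
Implicit Types (a b c d : H n) (i j k l : 'I_n) (f g h : fsum n) (s : Sym n).
Local Notation Idx := ('I_n * 'I_n * 'I_n * 'I_n * bool)%type.
Local Notation E := (@E n).
Lemma oF1 (a b : 'I_n) : (a < b)%N -> (a == b) = false.
Proof. by move=> h; apply/eqP => E; rewrite E ltnn in h. Qed.
Lemma oF2 (a b : 'I_n) : (a < b)%N -> (b == a) = false.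
Proof. by move=> h; apply/eqP => E; rewrite E ltnn in h. Qed.

Lemma inR_E f : inR f -> E f.
Proof. by move=> h; apply: (@E_rel n f [::] _ (@E_nil n)); rewrite cats0. Qed.

Lemma E_k s (k : int) : E [:: (1, s)] -> E [:: (k, s)].
Proof.
move=> E1.
have Hn : forall m : nat, E [:: ((m : int), s)].
  elim=> [|m IH].
    by apply: E_ext (@E_nil n) => s'; rewrite cf_nil cf_cons cf_nil; case: ifP.
  apply: E_ext (E_cat E1 IH) => s'; rewrite cf_cat !cf_cons !cf_nil /=.
  by case: ifP => _; rewrite ?addr0 // intS.
case: k => m; first exact: Hn.
apply: E_ext (E_neg (Hn m.+1)) => s'; rewrite cf_neg !cf_cons !cf_nil /=.
by case: ifP => _; rewrite ?oppr0 ?addr0 // NegzE.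
Qed.

Lemma E_all : (forall s, E [:: (1, s)]) -> forall f, E f.
Proof.
move=> H1; elim=> [|p f IH]; first exact: (@E_nil n).
apply: E_ext (E_cat (E_k p.1 (H1 p.2)) IH) => s; rewrite cf_cat !cf_cons cf_nil.
by rewrite addr0.
Qed.

Ltac crunch := move=> ?; rewrite !(cf_cat, cf_neg, cf_tsym, cf_ssym, cf_cons', cf_nil); ring.

Lemma E_as1 a b c d : E (tsym b a c d) -> E (tsym a b c d).
Proof. exact: E_rel (inR_rel (rel_as1 a b c d)). Qed.
Lemma E_as2 a b c d : E (tsym a b d c) -> E (tsym a b c d).
Proof. exact: E_rel (inR_rel (rel_as2 a b c d)). Qed.
Lemma E_as3 a b c d : E (tsym c d a b) -> E (tsym a b c d).
Proof. exact: E_eq (inR_rel (rel_as3 a b c d)). Qed.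

Lemma inR_t0l a c d : inR (tsym a a c d).
Proof.
apply: inR_ext (inR_cat (inR_rel (rel_ihx a a c d))
   (inR_cat (inR_rel (rel_as2 a d c a)) (inR_neg (inR_rel (rel_as3 a d a c))))).
crunch.
Qed.
Lemma inR_t0r a b c : inR (tsym a b c c).
Proof.
apply: inR_ext (inR_cat (inR_rel (rel_as3 a b c c)) (inR_t0l c a b)).
crunch.
Qed.

Local Notation Te i j k l := (E (tsym (e i) (e j) (e k) (e l))).

Ltac dec1 := match goal with
 | |- context [ @eq_op _ ?x ?y ] =>
     first [ rewrite (eqxx x) | rewrite (_ : (x == y) = false); last (apply/eqP => ?; subst; lia) ]
 | |- context [ (?x < ?y)%N ] =>
     first [ rewrite (_ : (x < y)%N = true); last lia | rewrite (_ : (x < y)%N = false); last lia ]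
 end.
Ltac dec := rewrite /valid /mkB /=; repeat dec1; rewrite /=.

Lemma T_abcd (a b c d : 'I_n) : (a < b)%N -> (b < c)%N -> (c < d)%N -> Te a b c d.
Proof.
move=> ab bc cd; have := @E_mkB n (a, b, c, d, false); dec; by apply.
Qed.

Lemma T_adbc (a b c d : 'I_n) : (a < b)%N -> (b < c)%N -> (c < d)%N -> Te a d b c.
Proof.
move=> ab bc cd; have := @E_mkB n (a, b, c, d, true); dec; by apply.
Qed.
Lemma T_acbd (a b c d : 'I_n) : (a < b)%N -> (b < c)%N -> (c < d)%N -> Te a c b d.
Proof.
move=> ab bc cd.
apply: E_rel (inR_rel (rel_ihx (e a) (e c) (e b) (e d))) _.
by apply: E_cat; apply: E_neg; [apply: T_adbc | apply: T_abcd].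
Qed.
Lemma T_abac (a b c : 'I_n) : (a < b)%N -> (b < c)%N -> Te a b a c.
Proof. move=> ab bc; have := @E_mkB n (a, a, b, c, false); dec; by apply. Qed.
Lemma T_babc (a b c : 'I_n) : (a < b)%N -> (b < c)%N -> Te b a b c.
Proof. move=> ab bc; have := @E_mkB n (a, b, b, c, false); dec; by apply. Qed.
Lemma T_cacb (a b c : 'I_n) : (a < b)%N -> (b < c)%N -> Te c a c b.
Proof. move=> ab bc; have := @E_mkB n (a, b, c, c, false); dec; by apply. Qed.
Lemma T_abbc (a b c : 'I_n) : (a < b)%N -> (b < c)%N -> Te a b b c.
Proof. by move=> ab bc; apply: E_as1; apply: T_babc. Qed.
Lemma T_acbc (a b c : 'I_n) : (a < b)%N -> (b < c)%N -> Te a c b c.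
Proof. by move=> ab bc; apply: E_as1; apply: E_as2; apply: T_cacb. Qed.
Lemma T_abab (a b : 'I_n) : (a < b)%N -> Te a b a b.
Proof.
move=> ab; have := @E_mkB n (a, a, b, b, false); dec => /(_ isT) H1.
apply: (@E_eq n _ [:: (2, inr (e a, e b))]); last exact: E_k.
apply: inR_ext (inR_neg (inR_rel (rel_s2 (e a) (e b)))); crunch.
Qed.

Lemma T_lex (i j k l : 'I_n) : (i < j)%N -> (k < l)%N -> (i < k)%N -> Te i j k l.
Proof.
move=> ij kl ik; case: (ltngtP j k) => [jk|kj|jk].
- exact: T_abcd.
- case: (ltngtP j l) => [jl|lj|jl].
  + exact: T_acbd.
  + exact: T_adbc.
  + by move/val_inj: jl => ?; subst; apply: T_acbc.
- by move/val_inj: jk => ?; subst; apply: T_abbc.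
Qed.

Lemma T_ord (i j k l : 'I_n) : (i < j)%N -> (k < l)%N -> Te i j k l.
Proof.
move=> ij kl; case: (ltngtP i k) => [ik|ki|ik].
- exact: T_lex.
- by apply: E_as3; apply: T_lex.
- move/val_inj: ik => ?; subst.
  case: (ltngtP j l) => [jl|lj|jl].
  + exact: T_abac.
  + by apply: E_as3; apply: T_abac.
  + by move/val_inj: jl => ?; subst; apply: T_abab.
Qed.

Lemma T_all (i j k l : 'I_n) : Te i j k l.
Proof.
case: (ltngtP i j) => [ij|ji|ij].
- case: (ltngtP k l) => [kl|lk|kl].
  + exact: T_ord.
  + by apply: E_as2; apply: T_ord.
  + by move/val_inj: kl => ?; subst; apply: inR_E; apply: inR_t0r.
- case: (ltngtP k l) => [kl|lk|kl].
  + by apply: E_as1; apply: T_ord.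
  + by apply: E_as1; apply: E_as2; apply: T_ord.
  + by move/val_inj: kl => ?; subst; apply: inR_E; apply: inR_t0r.
- by move/val_inj: ij => ?; subst; apply: inR_E; apply: inR_t0l.
Qed.

Lemma span_ind (P : H n -> Prop) : P 0 -> (forall x y, P x -> P y -> P (x + y)) ->
  (forall x, P x -> P (- x)) -> (forall i, P (e i)) -> forall a, P a.
Proof.
move=> P0 PD PN Pe a; rewrite (row_sum_delta a).
elim/big_ind: _ => // j _.
have Hn : forall m : nat, P (e j *+ m).
  by elim=> [|m IH]; rewrite ?mulr0n ?mulrS //; apply: PD.
rewrite -[a 0 j]intz scaler_int -/(e j).
by case: (a 0 j) => m; rewrite ?NegzE ?mulrNz; [apply: Hn | apply: PN; apply: Hn].
Qed.

Lemma slot (F : H n -> fsum n) :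
  (forall x y, exists g, E g /\ inR (F (x + y) ++ fneg (F x) ++ fneg (F y) ++ g)) ->
  (forall i, E (F (e i))) -> forall a, E (F a).
Proof.
move=> HF He.
have E0 : E (F 0).
  have [g [Eg Hg]] := HF 0 0; rewrite addr0 in Hg.
  apply: (@E_eq n _ g) Eg; apply: inR_ext (inR_neg Hg); crunch.
apply: span_ind => //.
- move=> x y Ex Ey; have [g [Eg Hg]] := HF x y.
  apply: E_rel Hg _; apply: E_cat; first exact: E_neg.
  by apply: E_cat => //; apply: E_neg.
- move=> x Ex; have [g [Eg Hg]] := HF x (- x); rewrite addrN in Hg.
  apply: (@E_rel n _ (F x ++ fneg (F 0) ++ fneg g)).
    apply: inR_ext (inR_neg Hg); crunch.
  by apply: E_cat => //; apply: E_cat; apply: E_neg.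
Qed.

Lemma slot_lin (F : H n -> fsum n) :
  (forall x y, inR (F (x + y) ++ fneg (F x) ++ fneg (F y))) ->
  (forall i, E (F (e i))) -> forall a, E (F a).
Proof.
move=> HF; apply: slot => x y; exists [::]; split; first exact: (@E_nil n).
by rewrite !catA cats0 -!catA.
Qed.

Lemma E_tsym a b c d : E (tsym a b c d).
Proof.
pose F1 := fun x => tsym x b c d; change (E (F1 a)).
apply: slot_lin => [x y|i]; first exact: inR_rel (rel_lin1 x y b c d).
pose F2 := fun x => tsym (e i) x c d; change (E (F2 b)).
apply: slot_lin => [x y|j]; first exact: inR_rel (rel_lin2 _ x y c d).
pose F3 := fun x => tsym (e i) (e j) x d; change (E (F3 c)).
apply: slot_lin => [x y|k]; first exact: inR_rel (rel_lin3 _ _ x y d).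
pose F4 := fun x => tsym (e i) (e j) (e k) x; change (E (F4 d)).
apply: slot_lin => [x y|l]; first exact: inR_rel (rel_lin4 _ _ _ x y).
exact: T_all.
Qed.

Lemma E_ssym_ee (i j : 'I_n) : E (ssym (e i) (e j)).
Proof.
case: (ltngtP i j) => [ij|ji|ij].
- by have := @E_mkB n (i, i, j, j, false); dec; apply.
- apply: (@E_eq n _ (ssym (e j) (e i))); first exact: inR_rel (rel_ssym _ _).
  by have := @E_mkB n (j, j, i, i, false); dec; apply.
- move/val_inj: ij => ?; subst; apply: inR_E; exact: inR_rel (rel_s0 _).
Qed.

Lemma E_ssym_sl b : (forall i, E (ssym (e i) b)) -> forall a, E (ssym a b).
Proof.
move=> Hb a; pose F := fun x => ssym x b; change (E (F a)).
apply: slot; last exact: Hb.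
move=> x y; exists (fneg (tsym x b y b)); split.
  exact: E_neg (E_tsym _ _ _ _).
exact: inR_rel (rel_sadd x y b).
Qed.

Lemma E_ssym a b : E (ssym a b).
Proof.
apply: E_ssym_sl => i.
apply: (@E_eq n _ (ssym b (e i))); first exact: inR_rel (rel_ssym _ _).
apply: E_ssym_sl => j; exact: E_ssym_ee.
Qed.

Lemma E_every f : E f.
Proof.
apply: E_all => -[[[[a b] c] d]|[a b]]; [exact: E_tsym | exact: E_ssym].
Qed.
End B.


Section C.
Variable n : nat.
Local Notation Idx := ('I_n * 'I_n * 'I_n * 'I_n * bool)%type.

Lemma ind4 (p q r s x0 x1 x2 x3 : 'I_n) :
  ~~ perm_eq [:: x0; x1; x2; x3] [:: p; q; r; s] ->
  ((x0 == p)%:R * (x1 == q)%:R * (x2 == r)%:R * (x3 == s)%:R : int) = 0.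
Proof.
move=> H; do 4 (case: eqP => [?|_]; last by rewrite ?mulr0 ?mul0r); subst.
by rewrite perm_refl in H.
Qed.

Lemma permcnt (V W : seq 'I_n) : (forall P : pred 'I_n, count P V = count P W) -> perm_eq V W.
Proof. by move=> H; apply/permP => P; apply: H. Qed.

Ltac pc := apply: permcnt => P /=; lia.

Lemma TelF_exp A B C D : TelF A B C D = A 0%N * B 1%N * C 2%N * D 3%N - A 0%N * B 1%N * C 3%N * D 2%N - A 0%N * B 3%N * C 1%N * D 2%N + A 0%N * B 3%N * C 2%N * D 1%N - A 1%N * B 0%N * C 2%N * D 3%N + A 1%N * B 0%N * C 3%N * D 2%N - A 1%N * B 2%N * C 0%N * D 3%N + A 1%N * B 2%N * C 3%N * D 0%N + A 2%N * B 1%N * C 0%N * D 3%N - A 2%N * B 1%N * C 3%N * D 0%N + A 2%N * B 3%N * C 0%N * D 1%N - A 2%N * B 3%N * C 1%N * D 0%N + A 3%N * B 0%N * C 1%N * D 2%N - A 3%N * B 0%N * C 2%N * D 1%N - A 3%N * B 2%N * C 0%N * D 1%N + A 3%N * B 2%N * C 1%N * D 0%N.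
Proof. rewrite /TelF; ring. Qed.
Lemma OdF_exp A B : OdF A B = A 0%N * B 1%N * A 2%N * B 3%N - A 0%N * B 1%N * A 3%N * B 2%N - A 0%N * B 3%N * A 1%N * B 2%N + A 0%N * B 3%N * A 2%N * B 1%N - A 1%N * B 0%N * A 2%N * B 3%N + A 1%N * B 0%N * A 3%N * B 2%N + A 3%N * B 0%N * A 1%N * B 2%N - A 3%N * B 0%N * A 2%N * B 1%N.
Proof. rewrite /OdF; ring. Qed.

Lemma nperm (V W P : seq 'I_n) : perm_eq V W -> ~~ perm_eq W P -> ~~ perm_eq V P.
Proof. by move=> VW; apply: contra => VP; rewrite perm_sym in VW; apply: perm_trans VW VP. Qed.

Lemma nperm2 (V P Q : seq 'I_n) : ~~ perm_eq V P -> perm_eq P Q -> ~~ perm_eq V Q.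
Proof. by move=> H PQ; apply: contra H => VQ; rewrite perm_sym in PQ; apply: perm_trans VQ PQ. Qed.

Lemma Tel_supp (p q r s w0 w1 w2 w3 : 'I_n) :
  ~~ perm_eq [:: w0; w1; w2; w3] [:: p; q; r; s] ->
  Tel (e p) (e q) (e r) (e s) [tuple w0; w1; w2; w3] = 0.
Proof.
move=> H; rewrite TelLE TelLw TelF_exp /wv !eE.
rewrite !ind4 ?subrr ?addr0 //; apply: nperm H; pc.
Qed.
Lemma odot_supp (p q w0 w1 w2 w3 : 'I_n) :
  ~~ perm_eq [:: w0; w1; w2; w3] [:: p; q; p; q] ->
  odot (e p) (e q) [tuple w0; w1; w2; w3] = 0.
Proof.
move=> H; rewrite OdLE OdLw OdF_exp /wv !eE.
rewrite !ind4 ?subrr ?addr0 //; apply: nperm H; pc.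
Qed.

Definition lets (x : Idx) : seq 'I_n := let: (a, b, c, d, _) := x in [:: a; b; c; d].

Lemma validE (a b c d : 'I_n) t : valid (a, b, c, d, t) ->
  [/\ a = b, (b < c)%N, c = d & t = false] \/ [/\ a = b, (b < c)%N, (c < d)%N & t = false] \/
  [/\ (a < b)%N, b = c, (c < d)%N & t = false] \/ [/\ (a < b)%N, (b < c)%N, c = d & t = false] \/
  [/\ (a < b)%N, (b < c)%N & (c < d)%N].
Proof.
rewrite /valid => /orP[/and4P[/eqP ? ? /eqP ? /negbTE ?]|/or4P[]].
- by left.
- by move=> /and4P[/eqP ? ? ? /negbTE ?]; right; left.
- by move=> /and4P[? /eqP ? ? /negbTE ?]; do 2 right; left.
- by move=> /and4P[? ? /eqP ? /negbTE ?]; do 3 right; left.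
- by move=> /and3P[? ? ?]; do 4 right.
Qed.

Lemma lets_sorted x : valid x -> sorted (fun u v : 'I_n => (u <= v)%N) (lets x).
Proof.
case: x => [[[[a b] c] d] t] /validE[|[|[|[]]]] [] *; subst => /=; apply/and4P; split => //; lia.
Qed.

Lemma lets_eq x y : valid x -> valid y -> perm_eq (lets x) (lets y) -> lets x = lets y.
Proof.
move=> vx vy; apply: (@sorted_eq _ (fun u v : 'I_n => (u <= v)%N)).
- by move=> u v w; apply: leq_trans.
- by move=> u v /andP[h1 h2]; apply: val_inj; apply/eqP; rewrite eqn_leq h1 h2.
- exact: lets_sorted.
- exact: lets_sorted.
Qed.

Lemma gen_supp x (w0 w1 w2 w3 : 'I_n) : ~~ perm_eq [:: w0; w1; w2; w3] (lets x) ->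
  gen (mkB x) [tuple w0; w1; w2; w3] = 0.
Proof.
case: x => [[[[a b] c] d] t] /= H; rewrite /mkB.
case: (a =P b) => [?|_]; [case: (c =P d) => [?|_] | case: (b =P c) => [?|_]; [|case: (c =P d) => [?|_]]];
  subst => /=.
- apply: odot_supp; apply: nperm2 H _; pc.
- apply: Tel_supp; apply: nperm2 H _; pc.
- apply: Tel_supp; apply: nperm2 H _; pc.
- apply: Tel_supp; apply: nperm2 H _; pc.
- case: t => /=; apply: Tel_supp; apply: nperm2 H _; pc.
Qed.

Lemma L_supp y (u : Tk n 4) :
  (forall w0 w1 w2 w3, perm_eq [:: w0; w1; w2; w3] (lets y) -> u [tuple w0; w1; w2; w3] = 0) ->
  L y u = 0.
Proof.
case: y => [[[[a b] c] d] t] /= H; rewrite /L.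
case: (a =P b) => [?|_]; [case: (c =P d) => [?|_] | case: (b =P c) => [?|_]; [|case: (c =P d) => [?|_]]];
  subst => /=; rewrite ?H ?oppr0 ?subr0 //; try pc.
case: t; rewrite ?H ?oppr0 ?subr0 //; pc.
Qed.

Ltac dec1 := match goal with
 | |- context [ @eq_op _ ?x ?y ] =>
     first [ rewrite (eqxx x) | rewrite (_ : (x == y) = false); last (apply/eqP => ?; subst; lia) ]
 | |- context [ (?x < ?y)%N ] =>
     first [ rewrite (_ : (x < y)%N = true); last lia | rewrite (_ : (x < y)%N = false); last lia ]
 end.

Lemma coord_same (a b c d : 'I_n) t t' : valid (a, b, c, d, t) -> valid (a, b, c, d, t') ->
  L (a, b, c, d, t') (gen (mkB (a, b, c, d, t))) = (t == t')%:R.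
Proof.
move=> v1 v2; case/validE: v1 => [|[|[|[]]]] [] *; subst;
  case/validE: v2 => [|[|[|[]]]] [] *; subst; try lia;
  rewrite /L /mkB; repeat dec1; rewrite /= ?TelLE ?OdLE ?TelLw ?OdLw /TelF /OdF /wv ?eE;
  repeat dec1; rewrite /=; try ring.
all: case: t; case: t'; rewrite /=; repeat dec1; rewrite /= TelLE !TelLw /TelF /wv ?eE; repeat dec1; rewrite /=; ring.
Qed.

Lemma coordL (x y : Idx) : valid x -> valid y -> L y (gen (mkB x)) = (x == y)%:R.
Proof.
move=> vx vy; case: (boolP (perm_eq (lets x) (lets y))) => P.
  have := lets_eq vx vy P.
  case: x vx {P} => [[[[a b] c] d] t] vx; case: y vy => [[[[a' b'] c'] d'] t'] vy [] ????.
  subst; rewrite coord_same // !xpair_eqE !eqxx.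
  done.
have -> : (x == y) = false.
  by apply/eqP => E; rewrite E perm_refl in P.
apply: L_supp => w0 w1 w2 w3 Hw; apply: gen_supp.
apply: contra P => Hx; rewrite perm_sym in Hx; exact: perm_trans Hx Hw.
Qed.
End C.


Section D.
Variable n : nat.
Local Notation Idx := ('I_n * 'I_n * 'I_n * 'I_n * bool)%type.

Lemma L_add (y : Idx) (u v : Tk n 4) : L y (u + v) = L y u + L y v.
Proof.
case: y => [[[[a b] c] d] t]; rewrite /L.
by repeat (case: ifP => _); rewrite !addfE; ring.
Qed.
Lemma L_0 (y : Idx) : L y (0 : Tk n 4) = 0.
Proof.
case: y => [[[[a b] c] d] t]; rewrite /L.
by repeat (case: ifP => _); rewrite !ffunE; ring.
Qed.
Lemma L_z (y : Idx) (u : Tk n 4) k : L y (u *~ k) = L y u * k.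
Proof.
case: y => [[[[a b] c] d] t]; rewrite /L.
by repeat (case: ifP => _); rewrite !ffunMzE !mulrzz; ring.
Qed.

Lemma L_Nc (y : Idx) (c : Idx -> int) : valid y -> L y (Phi (Nc c)) = c y.
Proof.
move=> vy; rewrite /Phi /Nc big_map (big_morph (L y) (L_add y) (L_0 y)).
rewrite big_seq (eq_bigr (fun x => if x == y then c y else 0)); last first.
  move=> x; rewrite mem_Ilist => vx /=; rewrite L_z coordL //.
  by case: eqP => [->|_]; rewrite ?mul1r ?mul0r.
rewrite -big_seq (bigD1_seq y) ?Ilist_uniq ?mem_Ilist //= eqxx big1 ?addr0 //.
by move=> x /negbTE ->.
Qed.

Section Key.
Variable z : Tk n 4.
Hypothesis Cz : Cyc z.
Hypothesis Hz : HLQ z.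
Hypothesis Lz : forall y : Idx, valid y -> L y z = 0.
Local Notation Y i j k l := (z [tuple i; j; k; l]).

Ltac dec1 := match goal with
 | |- context [ @eq_op _ ?x ?y ] =>
     first [ rewrite (eqxx x) | rewrite (_ : (x == y) = false); last (apply/eqP => ?; subst; lia) ]
 | |- context [ (?x < ?y)%N ] =>
     first [ rewrite (_ : (x < y)%N = true); last lia | rewrite (_ : (x < y)%N = false); last lia ]
 end.

Lemma K2 (a b : 'I_n) : [/\ Y a a a b = 0, Y a a b a = 0, Y a b a a = 0 & Y b a a a = 0].
Proof.
have h := Hz a a a b; have c1 := Cz a a a b; have c2 := Cz b a a a; have c3 := Cz a b a a.
have e0 : Y a a a b = 0 by lia.
split; lia.
Qed.

Lemma K3lt (a b : 'I_n) : (a < b)%N -> [/\ Y a a b b = 0, Y a b b a = 0 & Y b b a a = 0] /\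
   [/\ Y b a a b = 0, Y a b a b = 0 & Y b a b a = 0].
Proof.
move=> ab; have l := Lz (y := (a, a, b, b, false)).
rewrite /L /valid in l; move: l; repeat dec1; rewrite /= => /(_ isT) l.
have {}l : - Y a a b b = 0 := l.
have h := Hz a a b b; have c1 := Cz a a b b; have c2 := Cz b a a b; have c3 := Cz b b a a.
have c4 := Cz a b a b.
have t1 : Y a a b b = 0 by lia.
have t2 : Y a b b a = 0 by lia.
have t3 : Y a b a b = 0 by lia.
have t4 : Y b b a a = 0 by lia.
have t5 : Y b a a b = 0 by lia.
have t6 : Y b a b a = 0 by lia.
by split; split.
Qed.

Lemma K3 (a b : 'I_n) : a != b -> [/\ Y a a b b = 0, Y a b b a = 0 & Y b b a a = 0] /\
   [/\ Y b a a b = 0, Y a b a b = 0 & Y b a b a = 0].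
Proof.
move=> ab; case: (ltngtP a b) => h.
- exact: K3lt.
- by have [[? ? ?] [? ? ?]] := K3lt h; split; split.
- by move/val_inj: h => h; rewrite h eqxx in ab.
Qed.

Lemma Krr (r p q : 'I_n) : r != p -> r != q -> (p < q)%N -> Y r r p q = 0.
Proof.
move=> rp rq pq; case: (ltngtP r p) => h1.
- have l := Lz (y := (r, r, p, q, false)); rewrite /L /valid in l; move: l.
  repeat dec1; rewrite /= => /(_ isT) l.
  have {}l : - Y r r p q = 0 := l.
  by apply/eqP; rewrite -oppr_eq0; apply/eqP.
- case: (ltngtP r q) => h2.
  + have l := Lz (y := (p, r, r, q, false)); rewrite /L /valid in l; move: l.
    repeat dec1; rewrite /= => /(_ isT) l.
    have {}l : - Y r r p q = 0 := l.
  by apply/eqP; rewrite -oppr_eq0; apply/eqP.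
  + have l := Lz (y := (p, q, r, r, false)); rewrite /L /valid in l; move: l.
    repeat dec1; rewrite /= => /(_ isT) l.
    have {}l : - Y r r p q = 0 := l.
  by apply/eqP; rewrite -oppr_eq0; apply/eqP.
  + by move/val_inj: h2 => h2; rewrite h2 eqxx in rq.
- by move/val_inj: h1 => h1; rewrite h1 eqxx in rp.
Qed.

Lemma K4lt (r p q : 'I_n) : r != p -> r != q -> (p < q)%N ->
  [/\ Y r r p q = 0, Y r r q p = 0, Y r p r q = 0 & Y r q r p = 0].
Proof.
move=> rp rq pq; have e1 := Krr rp rq pq.
have h1 := Hz r r p q; have h2 := Hz r r q p.
have c1 := Cz r r p q; have c2 := Cz q r r p; have c3 := Cz p q r r.
have d1 := Cz r r q p; have d2 := Cz p r r q; have d3 := Cz q p r r.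
have f1 := Cz r p r q; have f2 := Cz q r p r.
have t1 : Y r p r q = 0 by lia.
have t2 : Y r r q p = 0 by lia.
have t3 : Y r q r p = 0 by lia.
by split.
Qed.

Lemma K4 (r p q : 'I_n) : r != p -> r != q -> p != q ->
  [/\ Y r r p q = 0, Y q r r p = 0 & Y p q r r = 0] /\ [/\ Y r p q r = 0, Y r p r q = 0 & Y q r p r = 0].
Proof.
move=> rp rq pq.
have [e1 e2 e3 e4] : [/\ Y r r p q = 0, Y r r q p = 0, Y r p r q = 0 & Y r q r p = 0].
  case: (ltngtP p q) => h.
  - exact: K4lt.
  - by have [] := K4lt rq rp h; split.
  - by move/val_inj: h => h; rewrite h eqxx in pq.
have c1 := Cz r r p q; have c2 := Cz q r r p; have c3 := Cz p q r r.
have f1 := Cz r p r q.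
have t1 : Y q r r p = 0 by lia.
have t2 : Y p q r r = 0 by lia.
have t3 : Y r p q r = 0 by lia.
have t4 : Y q r p r = 0 by lia.
by split; split.
Qed.

Lemma K5s (a b c d : 'I_n) : (a < b)%N -> (b < c)%N -> (c < d)%N ->
  [/\ Y a b c d = 0, Y a b d c = 0 & Y a c b d = 0] /\ [/\ Y a c d b = 0, Y a d b c = 0 & Y a d c b = 0].
Proof.
move=> ab bc cd.
have l0 := Lz (y := (a, b, c, d, false)); rewrite /L /valid in l0; move: l0.
repeat dec1; rewrite /= => /(_ isT) l0.
have l1 := Lz (y := (a, b, c, d, true)); rewrite /L /valid in l1; move: l1.
repeat dec1; rewrite /= => /(_ isT) l1.
have {}l0 : - Y a b d c = 0 := l0.
have {}l1 : - Y a b c d - Y a b d c = 0 := l1.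
have h1 := Hz a c b d; have h2 := Hz a b c d; have h3 := Hz a d b c; have h4 := Hz a b d c.
have t1 : Y a b c d = 0 by lia.
have t2 : Y a b d c = 0 by lia.
have t3 : Y a c b d = 0 by lia.
have t4 : Y a c d b = 0 by lia.
have t5 : Y a d b c = 0 by lia.
have t6 : Y a d c b = 0 by lia.
by split; split.
Qed.

Lemma K5min (a b c d : 'I_n) : (a < b)%N -> (a < c)%N -> (a < d)%N ->
  b != c -> b != d -> c != d -> Y a b c d = 0.
Proof.
move=> ab ac ad bc bd cd.
have nb : forall u v : 'I_n, u != v -> (u < v)%N \/ (v < u)%N.
  by move=> u v /eqP uv; case: (ltngtP u v) => h; [left|right|case: uv; apply: val_inj].
case: (nb _ _ bc) => h1; case: (nb _ _ bd) => h2; case: (nb _ _ cd) => h3.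
all: try lia.
- by have [[? ? ?] [? ? ?]] := K5s ab h1 h3.
- by have [[? ? ?] [? ? ?]] := K5s ab h2 h3.
- by have [[? ? ?] [? ? ?]] := K5s ad h2 h1.
- by have [[? ? ?] [? ? ?]] := K5s ac h1 h2.
- by have [[? ? ?] [? ? ?]] := K5s ac h3 h2.
- by have [[? ? ?] [? ? ?]] := K5s ad h3 h1.
Qed.
Lemma K2_0 (a b : 'I_n) : Y a a a b = 0.
Proof. by case: (K2 a b) => -> ? ? ?. Qed.

Lemma K2_1 (a b : 'I_n) : Y a a b a = 0.
Proof. by case: (K2 a b) => ? -> ? ?. Qed.

Lemma K2_2 (a b : 'I_n) : Y a b a a = 0.
Proof. by case: (K2 a b) => ? ? -> ?. Qed.

Lemma K2_3 (a b : 'I_n) : Y b a a a = 0.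
Proof. by case: (K2 a b) => ? ? ? ->. Qed.

Lemma K3_0 (a b : 'I_n) : a != b -> Y a a b b = 0.
Proof. by move=> h; case: (K3 h) => [[-> ? ?] [? ? ?]]. Qed.

Lemma K3_1 (a b : 'I_n) : a != b -> Y a b b a = 0.
Proof. by move=> h; case: (K3 h) => [[? -> ?] [? ? ?]]. Qed.

Lemma K3_2 (a b : 'I_n) : a != b -> Y b b a a = 0.
Proof. by move=> h; case: (K3 h) => [[? ? ->] [? ? ?]]. Qed.

Lemma K3_3 (a b : 'I_n) : a != b -> Y b a a b = 0.
Proof. by move=> h; case: (K3 h) => [[? ? ?] [-> ? ?]]. Qed.

Lemma K3_4 (a b : 'I_n) : a != b -> Y a b a b = 0.
Proof. by move=> h; case: (K3 h) => [[? ? ?] [? -> ?]]. Qed.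

Lemma K3_5 (a b : 'I_n) : a != b -> Y b a b a = 0.
Proof. by move=> h; case: (K3 h) => [[? ? ?] [? ? ->]]. Qed.

Lemma K4_0 (r p q : 'I_n) : r != p -> r != q -> p != q -> Y r r p q = 0.
Proof. by move=> h1 h2 h3; case: (K4 h1 h2 h3) => [[-> ? ?] [? ? ?]]. Qed.

Lemma K4_1 (r p q : 'I_n) : r != p -> r != q -> p != q -> Y q r r p = 0.
Proof. by move=> h1 h2 h3; case: (K4 h1 h2 h3) => [[? -> ?] [? ? ?]]. Qed.

Lemma K4_2 (r p q : 'I_n) : r != p -> r != q -> p != q -> Y p q r r = 0.
Proof. by move=> h1 h2 h3; case: (K4 h1 h2 h3) => [[? ? ->] [? ? ?]]. Qed.

Lemma K4_3 (r p q : 'I_n) : r != p -> r != q -> p != q -> Y r p q r = 0.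
Proof. by move=> h1 h2 h3; case: (K4 h1 h2 h3) => [[? ? ?] [-> ? ?]]. Qed.

Lemma K4_4 (r p q : 'I_n) : r != p -> r != q -> p != q -> Y r p r q = 0.
Proof. by move=> h1 h2 h3; case: (K4 h1 h2 h3) => [[? ? ?] [? -> ?]]. Qed.

Lemma K4_5 (r p q : 'I_n) : r != p -> r != q -> p != q -> Y q r p r = 0.
Proof. by move=> h1 h2 h3; case: (K4 h1 h2 h3) => [[? ? ?] [? ? ->]]. Qed.

Lemma min4 (a b c d : nat) : a <> b -> a <> c -> a <> d -> b <> c -> b <> d -> c <> d ->
  [\/ [/\ (a < b)%N, (a < c)%N & (a < d)%N], [/\ (b < a)%N, (b < c)%N & (b < d)%N],
       [/\ (c < a)%N, (c < b)%N & (c < d)%N] | [/\ (d < a)%N, (d < b)%N & (d < c)%N]].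
Proof.
move=> *; case: (ltngtP a b) => h1; last lia.
- case: (ltngtP a c) => h2; last lia.
  + case: (ltngtP a d) => h3; last lia.
    * by apply: Or41.
    * by apply: Or44; split; lia.
  + case: (ltngtP c d) => h3; last lia.
    * by apply: Or43; split; lia.
    * by apply: Or44; split; lia.
- case: (ltngtP b c) => h2; last lia.
  + case: (ltngtP b d) => h3; last lia.
    * by apply: Or42.
    * by apply: Or44; split; lia.
  + case: (ltngtP c d) => h3; last lia.
    * by apply: Or43; split; lia.
    * by apply: Or44; split; lia.
Qed.

Lemma neqN (u v : 'I_n) : u != v -> (u : nat) <> v.
Proof. by move=> /eqP h e; apply: h; apply: val_inj. Qed.

Lemma K5all (a b c d : 'I_n) : a != b -> a != c -> a != d -> b != c -> b != d -> c != d ->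
  Y a b c d = 0.
Proof.
move=> ab ac ad bc bd cd.
have r1 := Cz a b c d; have r2 := Cz d a b c; have r3 := Cz c d a b.
have := min4 (neqN ab) (neqN ac) (neqN ad) (neqN bc) (neqN bd) (neqN cd).
case=> [] [h1 h2 h3].
- by apply: K5min.
- rewrite r1 r2 r3; apply: K5min => //; by rewrite eq_sym.
- rewrite r1 r2; apply: K5min => //; by rewrite eq_sym.
- rewrite r1; apply: K5min => //; by rewrite eq_sym.
Qed.

Ltac sidec := solve [ done | by rewrite eq_sym ].
Lemma Yall (w0 w1 w2 w3 : 'I_n) : Y w0 w1 w2 w3 = 0.
Proof.
case: (eqVneq w0 w1) => [?|?]; case: (eqVneq w0 w2) => [?|?]; case: (eqVneq w0 w3) => [?|?];
case: (eqVneq w1 w2) => [?|?]; case: (eqVneq w1 w3) => [?|?]; case: (eqVneq w2 w3) => [?|?];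
subst; try (match goal with H : is_true (?x != ?x) |- _ => by rewrite eqxx in H end).
all: first [ apply: K2_0 | apply: K2_1 | apply: K2_2 | apply: K2_3
           | apply: K3_0; sidec | apply: K3_1; sidec | apply: K3_2; sidec
           | apply: K3_3; sidec | apply: K3_4; sidec | apply: K3_5; sidec
           | apply: K4_0; sidec | apply: K4_1; sidec | apply: K4_2; sidec
           | apply: K4_3; sidec | apply: K4_4; sidec | apply: K4_5; sidec
           | apply: K5all; sidec ].
Qed.
End Key.

Lemma key (z : Tk n 4) : Cyc z -> HLQ z -> (forall y : Idx, valid y -> L y z = 0) -> z = 0.
Proof.
move=> Cz Hz Lz; apply: tk4_ext => i j k l; rewrite ffunE; exact: Yall.
Qed.
End D.


Section Fin.
Variable n : nat.
Local Notation Idx := ('I_n * 'I_n * 'I_n * 'I_n * bool)%type.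

Lemma L_sub (y : Idx) (u v : Tk n 4) : L y (u - v) = L y u - L y v.
Proof. by rewrite L_add -mulrN1z L_z mulrN1. Qed.

Lemma Cyc_sub (u v : Tk n 4) : Cyc u -> Cyc v -> Cyc (u - v).
Proof. by move=> hu hv i j k l; rewrite !addfE !oppfE hu hv. Qed.
Lemma HLQ_sub (u v : Tk n 4) : HLQ u -> HLQ v -> HLQ (u - v).
Proof.
move=> hu hv h i j l; rewrite !addfE !oppfE.
by have := congr2 (fun x y => x - y) (hu h i j l) (hv h i j l); rewrite subr0 => <-; ring.
Qed.

Lemma surj (x : Tk n 4) : Dk (k := 2) x -> exists f : fsum n, Phi f = x.
Proof.
move=> [hl hb]; have cx := bmap0_cyc hb; have hx := hlQ hl.
pose c := fun y : Idx => L y x.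
exists (Nc c); apply/eqP; rewrite eq_sym -subr_eq0; apply/eqP.
apply: key.
- exact: Cyc_sub (Cyc_Phi _).
- exact: HLQ_sub (HLQ_Phi _).
- by move=> y vy; rewrite L_sub L_Nc // subrr.
Qed.

Lemma inj (f : fsum n) : Phi f = 0 -> inR f.
Proof.
move=> h0; have [c hc] := E_every f.
have hN : Phi (Nc c) = 0.
  have := Phi_inR hc; rewrite Phi_cat Phi_neg h0 add0r => /eqP; rewrite oppr_eq0 => /eqP.
  done.
have c0 : forall y : Idx, valid y -> c y = 0.
  by move=> y vy; rewrite -(L_Nc c vy) hN L_0.
apply: inR_ext hc => s; rewrite cf_cat cf_neg cf_Nc big_seq_cond big1 ?oppr0 ?addr0 //.
by move=> x /andP[]; rewrite mem_Ilist => vx _; apply: c0.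
Qed.
End Fin.

Unset Implicit Arguments.
Set Strict Implicit.

Theorem proposition2p1 (g : nat) (hg : (0 < g)%N) :
  (forall r : fsum (2 * g), relator r -> Phi r = 0) /\
  (forall x : Tk (2 * g) 4, Dk (k := 2) x <-> exists f : fsum (2 * g), Phi f = x) /\
  (forall f : fsum (2 * g), Phi f = 0 -> inR f).
Proof.
split; first exact: Phi_rel.
split; last exact: inj.
move=> x; split; first exact: surj.
move=> [f <-]; split; first exact: HL_Phi.
exact: cyc_bmap0 (Cyc_Phi f).
Qed.
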